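(* Let $d\ge1$, $W\ge2$, $n\ge1$, $\Omega=[0,1]^d$, and let $\Phi:(B_{\ell_\infty^{\tilde n}},\|\cdot\|_{\ell_\infty^{\tilde n}})\to C(\Omega)$ be the ReLU neural network parametrization map of width $W$ and depth $n$ described in the context. Then there is a constant $C'=C'(d)$ depending only on $d$ such that $$\|\Phi(y)-\Phi(y')\|_{C(\Omega)}\le C'nW^n\|y-y'\|_{\ell_\infty^{\tilde n}}\quad\text{for all }y,y'\in B_{\ell_\infty^{\tilde n}}.$$
   Context: Let $\tilde n=W(d+1)+(n-1)W(W+1)+(W+1)$, $\|y\|_{\ell_\infty^{\tilde n}}=\max_i|y_i|$ and $B_{\ell_\infty^{\tilde n}}=\{y\in\mathbb{R}^{\tilde n}:\|y\|_{\ell_\infty^{\tilde n}}\le1\}$. A vector $y\in\mathbb{R}^{\tilde n}$ lists (in a fixed order) the entries of affine maps $A^{(0)}(x)=A_0x+b^{(0)}$ with $A_0\in\mathbb{R}^{W\times d}$, $b^{(0)}\in\mathbb{R}^W$; $A^{(\ell)}(x)=A_\ell x+b^{(\ell)}$ with $A_\ell\in\mathbb{R}^{W\times W}$, $b^{(\ell)}\in\mathbb{R}^W$ for $\ell=1,\dots,n-1$; and $A^{(n)}(x)=A_nx+b^{(n)}$ with $A_n\in\mathbb{R}^{1\times W}$, $b^{(n)}\in\mathbb{R}$. With $\bar\sigma:\mathbb{R}^W\to\mathbb{R}^W$ applying $t\mapsto\max\{t,0\}$ coordinatewise, $\Phi(y)$ is the function $\Omega\to\mathbb{R}$ given by $\Phi(y)=A^{(n)}\circ\bar\sigma\circ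 A^{(n-1)}\circ\cdots\circ\bar\sigma\circ A^{(0)}$. $C(\Omega)$ carries the sup norm. *)

(* Defs.v *)
From HB Require Import structures.
From mathcomp Require Import all_boot all_order all_algebra.
From mathcomp Require Import reals.
Set Implicit Arguments. Unset Strict Implicit. Unset Printing Implicit Defensive.
Import Order.TTheory GRing.Theory Num.Theory.
Local Open Scope ring_scope.

Section NN.
Variable R : realType.

(* Parameter vector y of a ReLU network of width W and depth n with input
   dimension d, stored componentwise (the entries of y, in a fixed order):
   A^(0)(x) = A0 x + b0, A^(l)(x) = Ah l x + bh l (l = 1..n-1, indexed by
   'I_n.-1), A^(n)(x) = An x + bn. *)
Record params (d W n : nat) := Params {
  pA0 : 'M[R]_(W, d);
  pb0 : 'cV[R]_W;
  pAh : 'I_n.-1 -> 'M[R]_(W, W);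
  pbh : 'I_n.-1 -> 'cV[R]_W;
  pAn : 'M[R]_(1, W);
  pbn : R }.

Definition mxsup (p q : nat) (A : 'M[R]_(p, q)) : R :=
  \big[Num.max/0]_(i < p) \big[Num.max/0]_(j < q) `|A i j|.

Definition pdist (d W n : nat) (y y' : params d W n) : R :=
  Num.max (mxsup (pA0 y - pA0 y'))
  (Num.max (mxsup (pb0 y - pb0 y'))
  (Num.max (\big[Num.max/0]_(l < n.-1) mxsup (pAh y l - pAh y' l))
  (Num.max (\big[Num.max/0]_(l < n.-1) mxsup (pbh y l - pbh y' l))
  (Num.max (mxsup (pAn y - pAn y'))
           `|pbn y - pbn y'|)))).

Definition pnorm (d W n : nat) (y : params d W n) : R :=
  Num.max (mxsup (pA0 y))
  (Num.max (mxsup (pb0 y))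
  (Num.max (\big[Num.max/0]_(l < n.-1) mxsup (pAh y l))
  (Num.max (\big[Num.max/0]_(l < n.-1) mxsup (pbh y l))
  (Num.max (mxsup (pAn y)) `|pbn y|)))).

Definition relu (W : nat) (v : 'cV[R]_W) : 'cV[R]_W :=
  \col_i Num.max (v i 0) 0.

Definition realize (d W n : nat) (y : params d W n) (x : 'cV[R]_d) : R :=
  let h0 := relu (pA0 y *m x + pb0 y) in
  let h := foldl (fun h l => relu (pAh y l *m h + pbh y l)) h0 (enum 'I_n.-1) in
  (pAn y *m h) 0 0 + pbn y.

Definition in_cube (d : nat) (x : 'cV[R]_d) : Prop :=
  forall i, 0 <= x i 0 <= 1.

End NN.

(* Main.v *)
Require Import Defs.
From HB Require Import structures.
From mathcomp Require Import all_boot all_order all_algebra.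
From mathcomp Require Import reals.
From mathcomp Require Import ring lra.
Import Order.TTheory GRing.Theory Num.Theory.
Local Open Scope ring_scope.

Set Implicit Arguments. Unset Strict Implicit.
Section Aux.
Variable R : realType.

Lemma bmax_ge m (F : 'I_m -> R) j : F j <= \big[Num.max/0]_(i < m) F i.
Proof. exact: le_bigmax. Qed.

Lemma mxsup_ge p q (A : 'M[R]_(p, q)) i j : `|A i j| <= mxsup A.
Proof.
rewrite /mxsup.
apply: (@le_trans _ _ (\big[Num.max/0]_(j0 < q) `|A i j0|)).
  exact: (le_bigmax _ (fun j => `|A i j|) j).
exact: (le_bigmax _ (fun i => \big[Num.max/0]_(j0 < q) `|A i j0|) i).
Qed.

Lemma sum_bound q (f : 'I_q -> R) B : (forall k, `|f k| <= B) ->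
  `|\sum_(k < q) f k| <= q%:R * B.
Proof.
move=> hf; apply: le_trans (ler_norm_sum _ _ _) _.
have -> : q%:R * B = \sum_(k < q) B by rewrite sumr_const card_ord mulr_natl.
by apply: ler_sum => k _.
Qed.

Lemma mul_diff p q (A A' : 'M[R]_(p, q)) (h h' : 'cV[R]_q) e a dl i :
  (forall i j, `|A i j - A' i j| <= e) -> (forall i j, `|A' i j| <= 1) ->
  (forall k, `|h k 0| <= a) -> (forall k, `|h k 0 - h' k 0| <= dl) ->
  0 <= e ->
  `|(A *m h) i 0 - (A' *m h') i 0| <= q%:R * (e * a + dl).
Proof.
move=> hA hA' hh hd he; rewrite !mxE -sumrB; apply: sum_bound => k.
have -> : A i k * h k 0 - A' i k * h' k 0 =
  (A i k - A' i k) * h k 0 + A' i k * (h k 0 - h' k 0) by ring.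
apply: le_trans (ler_normD _ _) _; rewrite !normrM.
apply: lerD; first by apply: ler_pM.
by rewrite -[dl]mul1r; apply: ler_pM.
Qed.

Lemma mul_norm p q (A : 'M[R]_(p, q)) (h : 'cV[R]_q) a i :
  (forall i j, `|A i j| <= 1) -> (forall k, `|h k 0| <= a) ->
  `|(A *m h) i 0| <= q%:R * a.
Proof.
move=> hA hh; rewrite !mxE; apply: sum_bound => k.
rewrite normrM -[a]mul1r; by apply: ler_pM.
Qed.

Lemma relu_norm W (v : 'cV[R]_W) i : `|relu v i 0| <= `|v i 0|.
Proof.
rewrite /relu mxE; set u := v i 0.
have h1 := ler_norm u; have h2 := ler_normr u; have h3 := normr_ge0 u.
have h4 : - u <= `|u| by rewrite -normrN ler_norm.
case: (leP u 0) => hu;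
  rewrite ler_norml; apply/andP; split; lra.
Qed.

Lemma relu_diff W (v v' : 'cV[R]_W) i :
  `|relu v i 0 - relu v' i 0| <= `|v i 0 - v' i 0|.
Proof.
rewrite /relu !mxE; set u := v i 0; set u' := v' i 0.
set t := `|u - u'|.
have h1 : u - u' <= t by rewrite ler_norm.
have h4 : - (u - u') <= t by rewrite /t -normrN ler_norm.
case: (leP u 0) => hu; case: (leP u' 0) => hu';
  rewrite ler_norml; apply/andP; split; lra.
Qed.


Definition inv W (M c e : R) j (h h' : 'cV[R]_W) :=
  [/\ forall i, `|h i 0| + 1 <= M * W%:R ^+ j,
      forall i, `|h' i 0| + 1 <= M * W%:R ^+ j &
      forall i, `|h i 0 - h' i 0| <= c * j.+1%:R * W%:R ^+ j * e].

Arguments inv {W}.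

Lemma fold_bound W m (Ah Ah' : 'I_m -> 'M[R]_(W, W)) (bh bh' : 'I_m -> 'cV[R]_W)
  (e M c : R) :
  (2 <= W)%N -> 0 <= e -> M + 1 <= c ->
  (forall l i j, `|Ah l i j - Ah' l i j| <= e) ->
  (forall l i j, `|Ah l i j| <= 1) -> (forall l i j, `|Ah' l i j| <= 1) ->
  (forall l i, `|bh l i 0 - bh' l i 0| <= e) ->
  (forall l i, `|bh l i 0| <= 1) -> (forall l i, `|bh' l i 0| <= 1) ->
  forall s j h h', inv M c e j h h' ->
  inv M c e (j + size s)
    (foldl (fun h l => relu (Ah l *m h + bh l)) h s)
    (foldl (fun h l => relu (Ah' l *m h + bh' l)) h' s).
Proof.
move=> hW he hMc hA hA1 hA1' hb hb1 hb1' s.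
have hw : 2 <= W%:R :> R by rewrite (ler_nat R 2 W).
elim: s => [|l s IH] j h h' [H1 H2 H3] /=; first by rewrite addn0; split.
rewrite addnS -addSn; apply: IH.
set X := (W%:R : R) ^+ j. move: H1 H2 H3; rewrite -/X => H1 H2 H3.
have hX : 1 <= X by apply: exprn_ege1; lra.
have ea : forall k, `|h k 0| <= M * X - 1. move=> k; have := H1 k. lra.
have ea' : forall k, `|h' k 0| <= M * X - 1 by move=> k; have := H2 k; lra.
rewrite /inv exprS -/X; split.
- move=> i; have r := relu_norm (Ah l *m h + bh l) i.
  move: r; rewrite [in X in _ <= X]mxE => r.
  have := ler_normD ((Ah l *m h) i 0) (bh l i 0).
  have := mul_norm i (hA1 l) ea. have := hb1 l i.
  move=> q1 q2 q3.
  lra.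
- move=> i; have r := relu_norm (Ah' l *m h' + bh' l) i.
  move: r; rewrite [in X in _ <= X]mxE => r.
  have := ler_normD ((Ah' l *m h') i 0) (bh' l i 0).
  have := mul_norm i (hA1' l) ea'. have := hb1' l i.
  lra.
- move=> i; have r := relu_diff (Ah l *m h + bh l) (Ah' l *m h' + bh' l) i.
  have E : (Ah l *m h + bh l) i 0 - (Ah' l *m h' + bh' l) i 0 =
    ((Ah l *m h) i 0 - (Ah' l *m h') i 0) + (bh l i 0 - bh' l i 0).
    by rewrite [(Ah l *m h + bh l) i 0]mxE [(Ah' l *m h' + bh' l) i 0]mxE; ring.
  rewrite E in r.
  have q1 := ler_normD ((Ah l *m h) i 0 - (Ah' l *m h') i 0) (bh l i 0 - bh' l i 0).
  have q2 := mul_diff i (hA l) (hA1' l) ea H3 he.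
  have q3 := hb l i.
  have q4 : 0 <= (c - M - 1) * (W%:R * X * e).
    apply: mulr_ge0; first lra.
    apply: mulr_ge0 => //; apply: mulr_ge0; lra.
  have q5 : 0 <= (W%:R - 1) * e by apply: mulr_ge0; lra.
  rewrite -[j.+2]addn1 natrD -[j.+1]addn1 natrD in q2 *.
  have q6 : 0 <= W%:R * X * e by apply: mulr_ge0 => //; apply: mulr_ge0; lra.
  lra.
Qed.

Lemma pnorm_bounds d W n (y : params R d W n) : pnorm y <= 1 ->
  [/\ forall i j, `|pA0 y i j| <= 1, forall i, `|pb0 y i 0| <= 1,
      forall l i j, `|pAh y l i j| <= 1, forall l i, `|pbh y l i 0| <= 1
    & forall i j, `|pAn y i j| <= 1].
Proof.
move=> hy; split.
- move=> i j; apply: le_trans (mxsup_ge _ i j) (le_trans _ hy).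
  by rewrite /pnorm !le_max lexx.
- move=> i; apply: le_trans (mxsup_ge _ i 0) (le_trans _ hy).
  by rewrite /pnorm !le_max lexx ?orbT.
- move=> l i j; apply: le_trans (mxsup_ge _ i j) (le_trans _ hy).
  apply: le_trans (le_bigmax 0 (fun l => mxsup (pAh y l)) l) _.
  by rewrite /pnorm !le_max lexx ?orbT.
- move=> l i; apply: le_trans (mxsup_ge _ i 0) (le_trans _ hy).
  apply: le_trans (le_bigmax 0 (fun l => mxsup (pbh y l)) l) _.
  by rewrite /pnorm !le_max lexx ?orbT.
- move=> i j; apply: le_trans (mxsup_ge _ i j) (le_trans _ hy).
  by rewrite /pnorm !le_max lexx ?orbT.
Qed.

Lemma pdist_bounds d W n (y y' : params R d W n) :
  [/\ forall i j, `|pA0 y i j - pA0 y' i j| <= pdist y y',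
      forall i, `|pb0 y i 0 - pb0 y' i 0| <= pdist y y',
      forall l i j, `|pAh y l i j - pAh y' l i j| <= pdist y y',
      forall l i, `|pbh y l i 0 - pbh y' l i 0| <= pdist y y'
    & forall i j, `|pAn y i j - pAn y' i j| <= pdist y y'].
Proof.
split.
- move=> i j; have := mxsup_ge (pA0 y - pA0 y') i j; rewrite !mxE => /le_trans; apply.
  by rewrite /pdist !le_max lexx.
- move=> i; have := mxsup_ge (pb0 y - pb0 y') i 0; rewrite !mxE => /le_trans; apply.
  by rewrite /pdist !le_max lexx ?orbT.
- move=> l i j; have := mxsup_ge (pAh y l - pAh y' l) i j; rewrite !mxE => /le_trans; apply.
  apply: le_trans (le_bigmax 0 (fun l => mxsup (pAh y l - pAh y' l)) l) _.
  by rewrite /pdist !le_max lexx ?orbT.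
- move=> l i; have := mxsup_ge (pbh y l - pbh y' l) i 0; rewrite !mxE => /le_trans; apply.
  apply: le_trans (le_bigmax 0 (fun l => mxsup (pbh y l - pbh y' l)) l) _.
  by rewrite /pdist !le_max lexx ?orbT.
- move=> i j; have := mxsup_ge (pAn y - pAn y') i j; rewrite !mxE => /le_trans; apply.
  by rewrite /pdist !le_max lexx ?orbT.
Qed.

Lemma pdist_bn d W n (y y' : params R d W n) : `|pbn y - pbn y'| <= pdist y y'.
Proof. by rewrite /pdist !le_max lexx ?orbT. Qed.

End Aux.


Theorem theorem7p1 (R : realType) (d : nat) (hd : (1 <= d)%N) :
  exists C' : R, forall (W n : nat), (2 <= W)%N -> (1 <= n)%N ->
    forall y y' : params R d W n, pnorm y <= 1 -> pnorm y' <= 1 ->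
    forall x : 'cV[R]_d, in_cube x ->
      `|realize y x - realize y' x| <= C' * n%:R * W%:R ^+ n * pdist y y'.
Proof.
exists (2 * d%:R + 6) => W [//|k] hW _ y y' hy hy' x hx.
set e := pdist y y'.
have [hA0 hb0 hAh hbh hAn] := pdist_bounds y y'.
have hbn := pdist_bn y y'.
have [hA01 hb01 hAh1 hbh1 hAn1] := pnorm_bounds hy.
have [hA01' hb01' hAh1' hbh1' hAn1'] := pnorm_bounds hy'.
have he : 0 <= e by apply: le_trans (normr_ge0 _) hbn.
have hw : 2 <= W%:R :> R by rewrite (ler_nat R 2 W).
have hMc : (d%:R + 2) + 1 <= d%:R + 3 :> R by lra.
have xb : forall i, `|x i 0| <= 1.
  by move=> i; case/andP: (hx i) => a b; rewrite ger0_norm.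
pose h0 := relu (pA0 y *m x + pb0 y).
pose h0' := relu (pA0 y' *m x + pb0 y').
have base : inv (d%:R + 2) (d%:R + 3) e 0 h0 h0'.
  rewrite /inv expr0 mulr1; split.
  - move=> i; have r := relu_norm (pA0 y *m x + pb0 y) i.
    move: r; rewrite [in X in _ <= X]mxE => r.
    have := ler_normD ((pA0 y *m x) i 0) (pb0 y i 0).
    have := mul_norm i hA01 xb. have := hb01 i.
    lra.
  - move=> i; have r := relu_norm (pA0 y' *m x + pb0 y') i.
    move: r; rewrite [in X in _ <= X]mxE => r.
    have := ler_normD ((pA0 y' *m x) i 0) (pb0 y' i 0).
    have := mul_norm i hA01' xb. have := hb01' i.
    lra.
  - move=> i; have r := relu_diff (pA0 y *m x + pb0 y) (pA0 y' *m x + pb0 y') i.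
    have E : (pA0 y *m x + pb0 y) i 0 - (pA0 y' *m x + pb0 y') i 0 =
      ((pA0 y *m x) i 0 - (pA0 y' *m x) i 0) + (pb0 y i 0 - pb0 y' i 0).
      by rewrite [(pA0 y *m x + pb0 y) i 0]mxE [(pA0 y' *m x + pb0 y') i 0]mxE; ring.
    rewrite E in r.
    have q1 := ler_normD ((pA0 y *m x) i 0 - (pA0 y' *m x) i 0) (pb0 y i 0 - pb0 y' i 0).
    have hz : forall t, `|x t 0 - x t 0| <= 0 by move=> t; rewrite subrr normr0.
    have q2 := mul_diff i hA0 hA01' xb hz he.
    have q3 := hb0 i.
    have q4 : 0 <= d%:R * e by apply: mulr_ge0.
    rewrite /= mulr1n /h0 /h0'. change (pdist y y') with e in q2. change (pdist y y') with e in q3.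
    lra.
have F := fold_bound hW he hMc hAh hAh1 hAh1' hbh hbh1 hbh1' (enum 'I_k) base.
rewrite add0n size_enum_ord in F; case: F => F1 F2 F3.
pose H := foldl (fun h l => relu (pAh y l *m h + pbh y l)) h0 (enum 'I_k).
pose H' := foldl (fun h l => relu (pAh y' l *m h + pbh y' l)) h0' (enum 'I_k).
have -> : realize y x = (pAn y *m H) 0 0 + pbn y by [].
have -> : realize y' x = (pAn y' *m H') 0 0 + pbn y' by [].
move: F1 F2 F3; rewrite -/H -/H'.
set X := (W%:R : R) ^+ k => F1 F2 F3.
have hX : 1 <= X by apply: exprn_ege1; lra.
have ea : forall i, `|H i 0| <= (d%:R + 2) * X - 1 by move=> i; have := F1 i; lra.
have q2 := mul_diff 0 hAn hAn1' ea F3 he.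
have q1 := ler_normD ((pAn y *m H) 0 0 - (pAn y' *m H') 0 0) (pbn y - pbn y').
have E : (pAn y *m H) 0 0 + pbn y - ((pAn y' *m H') 0 0 + pbn y') =
  ((pAn y *m H) 0 0 - (pAn y' *m H') 0 0) + (pbn y - pbn y') by ring.
rewrite E exprS -/X.
have q6 : 0 <= W%:R * X * e by apply: mulr_ge0 => //; apply: mulr_ge0; lra.
have q5 : 0 <= (W%:R - 1) * e by apply: mulr_ge0; lra.
have q7 : 0 <= k%:R * (W%:R * X * e) by apply: mulr_ge0.
have q8 : 0 <= d%:R * (k%:R * (W%:R * X * e)) by apply: mulr_ge0.
have hk : k.+1%:R = k%:R + 1 :> R by rewrite -addn1 natrD.
rewrite hk in q2 *.
change (pdist y y') with e in q2. have q9 := hbn. change (pdist y y') with e in q9.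
lra.
Qed.
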